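(* Let $\Theta$ be a parameter space, $L(\boldsymbol{\theta}\mid D)$, $L(\boldsymbol{\theta}\mid D_0)$ likelihoods of the current and historical data, $\xi\in[0,1]$, $\alpha\in(-1,\infty)$, $z=(1+\alpha)/2$, and let $\pi_0,\tilde\pi_0$ be two baseline prior densities. Let $g^*$ (resp. $\tilde g^*$) be the generalized power posterior with baseline prior $\pi_0$ (resp. $\tilde\pi_0$): $$g^*(\boldsymbol{\theta})\propto\{(1-\xi)p_0(\boldsymbol{\theta})^z+\xi p_1(\boldsymbol{\theta})^z\}^{1/z},\quad p_0=L(\cdot\mid D)\pi_0,\ p_1=L(\cdot\mid D)L(\cdot\mid D_0)\pi_0,$$ and $\tilde g^*$ defined likewise with $\tilde\pi_0$ in place of $\pi_0$. Assume there is a measurable $\mathcal{A}\subset\Theta$ with $\pi_0(\mathcal{A})=\tilde\pi_0(\mathcal{A})=1$ and constants $0<m_L\le1\le M_L<\infty$ such that $m_L\le L(\boldsymbol{\theta}\mid D)\le M_L$ and $m_L\le L(\boldsymbol{\theta}\mid D_0)\le M_L$ for all $\boldsymbol{\theta}\in\mathcal{A}$, and constants $0<m_\pi\le1\le M_\pi$ with $m_\pi\le\pi_0(\boldsymbol{\theta})\le M_\pi$ and $m_\pi\le\tilde\pi_0(\boldsymbol{\theta})\le M_\pi$ for all $\boldsymbol{\theta}\in\Theta$. Then there exists a function $\alpha\mapsto K(\alpha)$ on $(-1,\infty)$ such that $$d_{\mathrm{TV}}(g^*,\tilde g^* )\le K(\alpha)\,d_{\mathrm{TV}}(\pi_0,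\tilde\pi_0).$$
   Context: $d_{\mathrm{TV}}(p,q)=\frac12\int_\Theta|p(\boldsymbol{\theta})-q(\boldsymbol{\theta})|d\boldsymbol{\theta}$. *)

(* Defs.v *)
From HB Require Import structures.
From mathcomp Require Import all_boot all_order all_algebra.
From mathcomp Require Import all_classical all_reals all_analysis.
Set Implicit Arguments. Unset Strict Implicit. Unset Printing Implicit Defensive.
Import Order.TTheory GRing.Theory Num.Theory.
Local Open Scope ring_scope.
Local Open Scope ereal_scope.

Section Defs.
Context (d : measure_display) (T : measurableType d) (R : realType).
Variable mu : {measure set T -> \bar R}.

Definition gpp_unnorm (xi z : R) (LD LD0 pi0 : T -> R) (x : T) : R :=
  ((1 - xi) * (LD x * pi0 x) `^ z + xi * (LD x * LD0 x * pi0 x) `^ z) `^ (z^-1).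

Definition normalize (f : T -> R) (x : T) : R :=
  f x / fine (\int[mu]_y (f y)%:E).

Definition gpp (xi alpha : R) (LD LD0 pi0 : T -> R) : T -> R :=
  normalize (gpp_unnorm xi ((1 + alpha) / 2) LD LD0 pi0).

Definition dTV (p q : T -> R) : \bar R :=
  (2^-1)%:E * \int[mu]_x (`|p x - q x|)%:E.

Definition is_density (p : T -> R) : Prop :=
  measurable_fun setT p /\ (forall x, (0 <= p x)%R) /\ \int[mu]_x (p x)%:E = 1.
End Defs.

(* Main.v *)
Require Import Defs.
From HB Require Import structures.
From mathcomp Require Import all_boot all_order all_algebra.
From mathcomp Require Import all_classical all_reals all_analysis.
From mathcomp Require Import ring lra.
From mathcomp Require Import measurable_realfun.
Import Order.TTheory GRing.Theory Num.Theory.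
Set Implicit Arguments. Unset Strict Implicit.
Local Open Scope ring_scope.
Local Open Scope ereal_scope.

Section Aux.
Context (d : measure_display) (T : measurableType d) (R : realType).

Lemma gpp_factor (xi z : R) (LD LD0 p : T -> R) x :
  (0 <= LD x)%R -> (0 <= LD0 x)%R -> (0 <= p x)%R -> (0 <= xi <= 1)%R -> (0 < z)%R ->
  gpp_unnorm xi z LD LD0 p x = (gpp_unnorm xi z LD LD0 (fun _ => 1%R) x * p x)%R.
Proof.
move=> h1 h2 h3 /andP[x0 x1] z0; rewrite /gpp_unnorm !mulr1.
rewrite powRM // (powRM _ (mulr_ge0 h1 h2) h3).
have -> : ((1 - xi) * (LD x `^ z * p x `^ z) + xi * ((LD x * LD0 x) `^ z * p x `^ z)
   = ((1 - xi) * LD x `^ z + xi * (LD x * LD0 x) `^ z) * p x `^ z)%R by ring.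
have s0 : (0 <= (1 - xi) * LD x `^ z + xi * (LD x * LD0 x) `^ z)%R.
  by apply: addr_ge0; apply: mulr_ge0; rewrite ?subr_ge0 ?powR_ge0.
rewrite (powRM _ s0 (powR_ge0 _ _)).
by rewrite -powRrM mulfV ?gt_eqF // powRr1.
Qed.

Lemma gpp_bound (xi z : R) (LD LD0 : T -> R) (lo hi : R) x :
  (0 <= lo)%R -> (lo <= LD x <= hi)%R -> (lo <= LD x * LD0 x <= hi)%R ->
  (0 <= xi <= 1)%R -> (0 < z)%R ->
  (lo <= gpp_unnorm xi z LD LD0 (fun _ => 1%R) x <= hi)%R.
Proof.
move=> lo0 /andP[a1 a2] /andP[b1 b2] /andP[x0 x1] z0; rewrite /gpp_unnorm !mulr1.
have a0 : (0 <= LD x)%R by apply: le_trans a1.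
have b0 : (0 <= LD x * LD0 x)%R by apply: le_trans b1.
have hi0 : (0 <= hi)%R by apply: le_trans a2.
have mono u v : (0 <= u)%R -> (0 <= v)%R -> (u <= v)%R -> (u `^ z <= v `^ z)%R.
  by move=> u0 v0 uv; apply: ge0_ler_powR => //; rewrite ?nnegrE // ltW.
have mono' u v : (0 <= u)%R -> (0 <= v)%R -> (u <= v)%R -> (u `^ z^-1 <= v `^ z^-1)%R.
  by move=> u0 v0 uv; apply: ge0_ler_powR => //; rewrite ?nnegrE // ltW // invr_gt0.
have inv u : (0 <= u)%R -> ((u `^ z) `^ z^-1 = u)%R.
  by move=> u0; rewrite -powRrM mulfV ?gt_eqF // powRr1.
have La := mono _ _ lo0 a0 a1; have Lb := mono _ _ lo0 b0 b1.
have Ua := mono _ _ a0 hi0 a2; have Ub := mono _ _ b0 hi0 b2.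
set s := ((1 - xi) * _ + _)%R.
have s0 : (0 <= s)%R by apply: addr_ge0; apply: mulr_ge0; rewrite ?subr_ge0 ?powR_ge0.
have s1 : (lo `^ z <= s)%R by rewrite /s; nra.
have s2 : (s <= hi `^ z)%R by rewrite /s; nra.
apply/andP; split.
  by rewrite -{1}(inv lo lo0); apply: mono' => //; rewrite powR_ge0.
by rewrite -{1}(inv hi hi0); apply: mono' => //; rewrite powR_ge0.
Qed.

Lemma gpp_meas (xi z : R) (LD LD0 : T -> R) :
  measurable_fun setT LD -> measurable_fun setT LD0 ->
  measurable_fun setT (gpp_unnorm xi z LD LD0 (fun _ => 1%R)).
Proof.
move=> m1 m2; rewrite /gpp_unnorm.
apply: (measurableT_comp (measurable_powR _)).
apply: measurable_funD.
  apply: measurable_funM => //.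
  apply: (measurableT_comp (measurable_powR _)).
  exact: measurable_funM.
apply: measurable_funM => //.
apply: (measurableT_comp (measurable_powR _)).
apply: measurable_funM => //.
exact: measurable_funM.
Qed.

Lemma measE (D : set T) (F : T -> R) : measurable_fun setT F -> measurable_fun D ((EFin \o F) : T -> \bar R).
Proof. by move=> mF; apply/measurable_EFinP; apply: measurable_funTS. Qed.

End Aux.

Unset Implicit Arguments.

Theorem mainTheorem8 (d : measure_display) (T : measurableType d) (R : realType)
  (mu : {measure set T -> \bar R}) (mL ML mpi Mpi : R) :
  (0 < mL)%R -> (mL <= 1)%R -> (1 <= ML)%R ->
  (0 < mpi)%R -> (mpi <= 1)%R -> (1 <= Mpi)%R ->
  exists K : R -> R,
  forall (xi alpha : R) (LD LD0 pi0 tpi0 : T -> R) (A : set T),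
    (0 <= xi <= 1)%R -> (-1 < alpha)%R ->
    measurable_fun setT LD -> measurable_fun setT LD0 ->
    (forall x, 0 <= LD x)%R -> (forall x, 0 <= LD0 x)%R ->
    is_density mu pi0 -> is_density mu tpi0 ->
    measurable A ->
    \int[mu]_(x in A) (pi0 x)%:E = 1 -> \int[mu]_(x in A) (tpi0 x)%:E = 1 ->
    (forall x, A x -> mL <= LD x <= ML)%R ->
    (forall x, A x -> mL <= LD0 x <= ML)%R ->
    (forall x, mpi <= pi0 x <= Mpi)%R ->
    (forall x, mpi <= tpi0 x <= Mpi)%R ->
    dTV mu (gpp mu xi alpha LD LD0 pi0) (gpp mu xi alpha LD LD0 tpi0)
      <= (K alpha)%:E * dTV mu pi0 tpi0.
Proof.
move=> mL0 mL1 ML1 mpi0 mpi1 Mpi1.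
exists (fun _ => ML ^+ 2 / mL ^+ 2 + ML ^+ 2 / mL ^+ 2)%R.
move=> xi alpha LD LD0 pi0 tpi0 A hxi halpha mLD mLD0 LDge LD0ge
  [mpi0m [pige ipi]] [mtpi0 [tpige itpi]] mA iA tiA bLD bLD0 bpi btpi.
have z0 : (0 < (1 + alpha) / 2)%R by apply: divr_gt0 => //; lra.
set z := ((1 + alpha) / 2)%R in z0.
set h := gpp_unnorm xi z LD LD0 (fun _ => 1%R).
have mh : measurable_fun setT h by apply: gpp_meas.
have h0 x : (0 <= h x)%R by rewrite /h /gpp_unnorm powR_ge0.
have hb x : A x -> (mL ^+ 2 <= h x <= ML ^+ 2)%R.
  move=> Ax; apply: gpp_bound => //.
  - by apply: sqr_ge0.
  - by move: (bLD x Ax) => /andP[? ?]; apply/andP; split; nra.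
  - by move: (bLD x Ax) (bLD0 x Ax) => /andP[? ?] /andP[? ?]; apply/andP; split; nra.
have mAC : measurable (~` A)%classic by apply: measurableC.
have nullA : mu (~` A)%classic = 0.
  have e : \int[mu]_x (pi0 x)%:E = \int[mu]_(x in A) (pi0 x)%:E + \int[mu]_(x in (~` A)%classic) (pi0 x)%:E.
    rewrite -ge0_integral_setU ?setUv //; first exact: measE.
    - by move=> x _; rewrite lee_fin.
    - by rewrite disj_set2E setICr.
  move: e; rewrite ipi iA => /esym e.
  have e0 : \int[mu]_(x in (~` A)%classic) (pi0 x)%:E = 0.
    move: (\int[mu]_(x in (~` A)%classic) (pi0 x)%:E) e => X.
    case: X => [r| |].
    - by rewrite -EFinD => -[] ?; congr EFin; lra.
    - by rewrite addey.
    - by rewrite addeNy.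
  apply/eqP; rewrite eq_le measure_ge0 andbT.
  have : (mpi%:E * mu (~` A)%classic <= 0)%E.
    rewrite -e0 -integral_cst //; apply: ge0_le_integral; rewrite //=.
    - by move=> x _; rewrite lee_fin ltW.
    - exact: measE.
    - by move=> x _; rewrite lee_fin; move: (bpi x) => /andP[].
  by rewrite pmule_rle0 ?lte_fin.
have intA (F : T -> R) : measurable_fun setT F -> (forall x, 0 <= F x)%R ->
    \int[mu]_x (F x)%:E = \int[mu]_(x in A) (F x)%:E.
  move=> mF F0; rewrite (ge0_negligible_integral _ _ _ _ nullA) //.
  - by rewrite setTD setCK.
  - exact: measE.
  - by move=> x _; rewrite lee_fin.
have norm (p : T -> R) : measurable_fun setT p -> (forall x, 0 <= p x)%R ->
    \int[mu]_(x in A) (p x)%:E = 1 ->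
    exists c : R, [/\ \int[mu]_x (h x * p x)%:E = c%:E, (mL ^+ 2 <= c <= ML ^+ 2)%R &
      gpp mu xi alpha LD LD0 p = (fun x => h x * p x / c)%R].
  move=> mp p0 ip.
  have mhp : measurable_fun setT (fun x => h x * p x)%R by apply: measurable_funM.
  have hp0 x : (0 <= h x * p x)%R by apply: mulr_ge0.
  have lo : ((mL ^+ 2)%:E <= \int[mu]_(x in A) (h x * p x)%:E)%E.
    rewrite -[X in (X <= _)%E]mule1 -ip -ge0_integralZl //; last 3 first.
    - exact: measE.
    - by move=> x _; rewrite lee_fin.
    - by rewrite lee_fin sqr_ge0.
    apply: ge0_le_integral => //.
    - by move=> x _; rewrite -EFinM lee_fin mulr_ge0 ?sqr_ge0.
    - by apply: measurable_funeM; exact: measE.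
    - exact: measE.
    - by move=> x Ax; rewrite -EFinM lee_fin ler_wpM2r //; case/andP: (hb x Ax).
  have hi : (\int[mu]_(x in A) (h x * p x)%:E <= (ML ^+ 2)%:E)%E.
    rewrite -[X in (_ <= X)%E]mule1 -ip -ge0_integralZl //; last 3 first.
    - exact: measE.
    - by move=> x _; rewrite lee_fin.
    - by rewrite lee_fin sqr_ge0.
    apply: ge0_le_integral => //.
    - by move=> x _; rewrite lee_fin.
    - exact: measE.
    - by apply: measurable_funeM; exact: measE.
    - by move=> x Ax; rewrite -EFinM lee_fin ler_wpM2r //; case/andP: (hb x Ax).
  have [c Ic] : exists c, \int[mu]_(x in A) (h x * p x)%:E = c%:E.
    move: lo hi; case: (\int[mu]_(x in A) (h x * p x)%:E) => [r| |].
    - by move=> _ _; exists r.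
    - by rewrite leye_eq.
    - by rewrite leeNy_eq.
  have IT : \int[mu]_x (h x * p x)%:E = c%:E by rewrite intA.
  exists c; split => //.
    by rewrite -!lee_fin -Ic lo hi.
  apply/funext => x; rewrite /gpp /normalize -/z.
  have -> : \int[mu]_y (gpp_unnorm xi z LD LD0 p y)%:E = c%:E.
    by rewrite -IT; apply: eq_integral => y _; rewrite (gpp_factor (LDge y) (LD0ge y) (p0 y) hxi z0).
  by rewrite /= (gpp_factor (LDge x) (LD0ge x) (p0 x) hxi z0).
have IA (p : T -> R) (c : R) : measurable_fun setT p -> (forall x, 0 <= p x)%R ->
    \int[mu]_x (h x * p x)%:E = c%:E -> \int[mu]_(x in A) (h x * p x)%:E = c%:E.
  move=> mp p0 <-; rewrite intA //; first exact: measurable_funM.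
  by move=> x; apply: mulr_ge0.
have [c [Ic cb ->]] := norm pi0 mpi0m pige iA.
have [tc [tIc tcb ->]] := norm tpi0 mtpi0 tpige tiA.
have IcA := IA _ _ mpi0m pige Ic.
have tIcA := IA _ _ mtpi0 tpige tIc.
have mL20 : (0 < mL ^+ 2)%R by apply: exprn_gt0.
have c0 : (0 < c)%R by case/andP: cb => + _; apply: lt_le_trans.
have tc0 : (0 < tc)%R by case/andP: tcb => + _; apply: lt_le_trans.
rewrite /dTV muleCA; apply: lee_wpmul2l; first by rewrite lee_fin invr_ge0.
have mdiff : measurable_fun setT (fun x => `|pi0 x - tpi0 x|)%R.
  by apply: measurableT_comp => //; exact: measurable_funB.
have mhd : measurable_fun setT (fun x => h x * `|pi0 x - tpi0 x|)%R.
  exact: measurable_funM.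
have mhpi : measurable_fun setT (fun x => h x * pi0 x)%R by exact: measurable_funM.
have mhtpi : measurable_fun setT (fun x => h x * tpi0 x)%R by exact: measurable_funM.
rewrite (intA (fun x => `|pi0 x - tpi0 x|)%R) //.
rewrite (intA (fun x => `|h x * pi0 x / c - h x * tpi0 x / tc|)%R) //; last first.
  apply: measurableT_comp => //; apply: measurable_funB.
    by apply: measurable_funM => //.
  by apply: measurable_funM => //.
set J := \int[mu]_(x in A) (`|pi0 x - tpi0 x|)%:E.
set II := \int[mu]_(x in A) (h x * `|pi0 x - tpi0 x|)%:E.
have J0 : (0 <= J)%E by apply: integral_ge0 => x _; rewrite lee_fin.
have I0 : (0 <= II)%E by apply: integral_ge0 => x _; rewrite lee_fin mulr_ge0.
have hcI (p q : T -> R) (cp cq : R) : measurable_fun setT p -> measurable_fun setT q ->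
    (forall x, 0 <= p x)%R -> (forall x, 0 <= q x)%R -> (forall x, `|pi0 x - tpi0 x| = `|p x - q x|)%R ->
    \int[mu]_(x in A) (h x * p x)%:E = cp%:E -> \int[mu]_(x in A) (h x * q x)%:E = cq%:E ->
    (cp%:E <= cq%:E + II)%E.
  move=> mp mq p0 q0 pq <- <-; rewrite /II -ge0_integralD //; last 4 first.
  - by move=> x _; rewrite lee_fin mulr_ge0.
  - by apply: measE; exact: measurable_funM.
  - by move=> x _; rewrite lee_fin mulr_ge0.
  - exact: measE.
  apply: ge0_le_integral => //.
  - by move=> x _; rewrite lee_fin mulr_ge0.
  - by apply: measE; exact: measurable_funM.
  - apply: emeasurable_funD; apply: measE => //; exact: measurable_funM.
  - move=> x _; rewrite -EFinD lee_fin pq -mulrDr; apply: ler_wpM2l => //.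
    by have := ler_norm (p x - q x); lra.
have c1 := hcI pi0 tpi0 c tc mpi0m mtpi0 pige tpige (fun x => erefl) IcA tIcA.
have c2 := hcI tpi0 pi0 tc c mtpi0 mpi0m tpige pige (fun x => distrC _ _) tIcA IcA.
have dI : ((`|tc - c|)%:E <= II)%E.
  suff gen : forall Iv : \bar R, (c%:E <= tc%:E + Iv -> tc%:E <= c%:E + Iv -> 0 <= Iv ->
    (`|tc - c|)%:E <= Iv)%E by exact: gen.
  case => [r| |].
  all: try by move=> *; rewrite leey.
  all: try by move=> h1; rewrite addeNy leeNy_eq in h1.
  move=> h1 h2 _; rewrite -!EFinD !lee_fin in h1 h2.
  by rewrite lee_fin ler_norml; apply/andP; split; lra.
have IJ : (II <= (ML ^+ 2)%:E * J)%E.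
  rewrite /II /J -ge0_integralZl //.
  all: try exact: (measE mdiff).
  all: try by rewrite lee_fin sqr_ge0.
  apply: ge0_le_integral => //.
  all: try by move=> x _; rewrite lee_fin mulr_ge0.
  all: try exact: (measE mhd).
  all: try by apply: measurable_funeM; exact: (measE mdiff).
  by move=> x Ax; rewrite -EFinM lee_fin ler_wpM2r //; case/andP: (hb x Ax).
have eK : (`|c^-1 - tc^-1| * tc)%R = (c^-1 * `|tc - c|)%R.
  have -> : (c^-1 - tc^-1)%R = ((tc - c) * (c^-1 * tc^-1))%R.
    by field; apply/andP; split; rewrite gt_eqF.
  rewrite normrM (ger0_norm (x := (c^-1 * tc^-1)%R)); last by rewrite mulr_ge0 // invr_ge0 ltW.
  by field; apply/andP; split; rewrite gt_eqF.
apply: (@le_trans _ _ (\int[mu]_(x in A) ((c^-1)%R%:E * (h x * `|pi0 x - tpi0 x|)%:E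
   + (`|c^-1 - tc^-1|)%R%:E * (h x * tpi0 x)%:E)%E)%E).
  apply: ge0_le_integral => //.
  all: try by move=> x _; rewrite lee_fin.
  all: try by apply: measE; apply: measurableT_comp => //; apply: measurable_funB;
    apply: measurable_funM => //.
  all: try by apply: emeasurable_funD; apply: measurable_funeM; exact: measE.
  - move=> x Ax; rewrite -!EFinM -EFinD lee_fin.
    have -> : (h x * pi0 x / c - h x * tpi0 x / tc)%R = (c^-1 * (h x * (pi0 x - tpi0 x))
       + (c^-1 - tc^-1) * (h x * tpi0 x))%R by ring.
    apply: le_trans (ler_normD _ _) _.
    have ci0 : (0 <= c^-1)%R by rewrite invr_ge0 ltW.
    by rewrite !normrM (ger0_norm ci0) (ger0_norm (h0 x)) (ger0_norm (tpige x)).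
rewrite ge0_integralD //.
all: try by move=> x _; rewrite mule_ge0 // lee_fin ?invr_ge0 ?ltW // mulr_ge0.
all: try by apply: measurable_funeM; exact: measE.
rewrite !ge0_integralZl //.
all: try exact: measE.
all: try by move=> x _; rewrite lee_fin mulr_ge0.
all: try by rewrite lee_fin invr_ge0 ltW.
all: try by move=> x _; rewrite -EFinM lee_fin mulr_ge0 // ?invr_ge0 ?ltW // mulr_ge0.
rewrite -/II tIcA -EFinM eK.
apply: (@le_trans _ _ ((c^-1)%R%:E * II + (c^-1)%R%:E * II)).
  apply: leeD2l; rewrite EFinM; apply: lee_wpmul2l => //.
  by rewrite lee_fin invr_ge0 ltW.
have cI : ((c^-1)%R%:E * II <= (ML ^+ 2 / mL ^+ 2)%:E * J)%E.
  apply: (le_trans (lee_wpmul2l _ IJ)); first by rewrite lee_fin invr_ge0 ltW.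
  rewrite muleA -EFinM; apply: lee_wpmul2r => //; rewrite lee_fin mulrC.
  rewrite ler_wpM2l ?sqr_ge0 // lef_pV2 ?posrE //; by case/andP: cb.
rewrite EFinD ge0_muleDl ?lee_fin ?divr_ge0 ?sqr_ge0 //; exact: leeD.
all: move=> x _; apply: mule_ge0; rewrite lee_fin //.
all: try by rewrite invr_ge0 ltW.
all: by apply: mulr_ge0.
Qed.
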